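(* Let $K$ be a local field of characteristic $0$, $D$ a finite-dimensional division $K$-algebra, and $A,H$ finite subgroups of $\mathrm{GL}_n(D)$. Set $C=A\cap H$ and assume $[A:C]>2$ or $[H:C]>2$. Let $\delta:H\to M_n(D)$, $h\mapsto\delta_h$, be such that $\varphi_t:H\to\mathrm{GL}_n(D)$, $h\mapsto h+t\delta_h$ ($t\in K^\times$), is a family of first-order deformations, and assume (i) for $g\in H$: $\delta_g=0$ if and only if $g\in C$; and (ii) $a\,\mathrm{im}(\delta_h)\cap\ker(\delta_{h'})=\{0\}$ for all $a\in A\setminus C$ and $h,h'\in H\setminus C$. Then there exists $N\in\mathbb{R}$ such that for all $t$ with $|t|\ge N$, $\langle A,\varphi_t(H)\rangle\cong A*_C\varphi_t(H)\cong A*_C H$ (the first isomorphism being the canonical map).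
   Context: A first-order deformation of a subgroup $H$ of the unit group of an algebra is a linear map $\varphi$, $h\mapsto h+\delta_h$, where $\delta$ satisfies $\delta_{hk}=\delta_hk+h\delta_k$ and $\delta_h\delta_k=0$ for all $h,k\in H$; such maps are group morphisms. Here $\mathrm{im}(\delta_h)$ and $\ker(\delta_h)$ are the image and kernel of $\delta_h$ acting on $D^n$ (as $D$-subspaces). *)

(* Defs.v *)
From HB Require Import structures.
From mathcomp Require Import all_boot all_order all_algebra.
From mathcomp Require Import falgebra.
From mathcomp Require Import boolp classical_sets cardinality reals.
Set Implicit Arguments. Unset Strict Implicit. Unset Printing Implicit Defensive.
Import Order.TTheory GRing.Theory Num.Theory.
Local Open Scope ring_scope.
Local Open Scope classical_set_scope.

Definition abs_value (K : fieldType) (R : realType) (v : K -> R) : Prop :=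
  [/\ forall x, 0 <= v x,
      forall x, v x = 0 <-> x = 0,
      forall x y, v (x * y) = v x * v y
    & forall x y, v (x + y) <= v x + v y].

Definition v_converges (K : fieldType) (R : realType) (v : K -> R)
  (u : nat -> K) (l : K) : Prop :=
  forall e : R, 0 < e -> exists N, forall n, (N <= n)%N -> v (u n - l) < e.

Definition v_cauchy (K : fieldType) (R : realType) (v : K -> R)
  (u : nat -> K) : Prop :=
  forall e : R, 0 < e -> exists N, forall m n, (N <= m)%N -> (N <= n)%N ->
    v (u m - u n) < e.

(* A local field: a field complete with respect to a nontrivial absolute
   value, and locally compact for the induced metric topology (some closed
   ball around 0, hence around every point, is (sequentially) compact). *)
Definition local_field (K : fieldType) (R : realType) (v : K -> R) : Prop :=
  [/\ abs_value v,
      exists x : K, v x <> 0 /\ v x <> 1,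
      forall u : nat -> K, v_cauchy v u -> exists l, v_converges v u l
    & exists r : R, 0 < r /\
        forall u : nat -> K, (forall n, v (u n) <= r) ->
          exists (phi : nat -> nat) (l : K),
            (forall n, (phi n < phi n.+1)%N) /\ v_converges v (u \o phi) l].

Section MxGroups.
Variables (D : nzRingType) (n : nat).
Local Notation M := 'M[D]_n.

Definition mx_inverse (x y : M) : Prop := x *m y = 1%:M /\ y *m x = 1%:M.

Definition mx_subgroup (S : set M) : Prop :=
  [/\ S 1%:M,
      forall x y, S x -> S y -> S (x *m y)
    & forall x, S x -> exists y, S y /\ mx_inverse x y].

Definition finite_mx_subgroup (S : set M) : Prop :=
  mx_subgroup S /\ finite_set S.

Definition mx_gen (S : set M) : set M :=
  [set x | forall G, mx_subgroup G -> S `<=` G -> G x].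

Definition lcoset (C : set M) (a : M) : set M := [set a *m c | c in C].

Definition index_gt2 (A C : set M) : Prop :=
  exists a1 a2 a3, [/\ A a1, A a2 & A a3] /\
    [/\ lcoset C a1 <> lcoset C a2, lcoset C a1 <> lcoset C a3
       & lcoset C a2 <> lcoset C a3].

Definition mx_im (m : M) : set 'cV[D]_n := [set m *m w | w in setT].
Definition mx_ker (m : M) : set 'cV[D]_n := [set w | m *m w = 0].
Definition mx_lmul_set (a : M) (S : set 'cV[D]_n) : set 'cV[D]_n :=
  [set a *m w | w in S].

(* delta : H -> M_n(D) defines a first-order deformation h |-> h + delta_h *)
Definition first_order_deformation (H : set M) (delta : M -> M) : Prop :=
  (forall h k, H h -> H k -> delta (h *m k) = delta h *m k + h *m delta k) /\
  (forall h k, H h -> H k -> delta h *m delta k = 0).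

End MxGroups.

Record grp := Grp {
  gcar :> Type;
  gmul : gcar -> gcar -> gcar;
  gone : gcar;
  ginv : gcar -> gcar;
  gmulA : forall x y z, gmul x (gmul y z) = gmul (gmul x y) z;
  gmul1 : forall x, gmul gone x = x;
  gmulV : forall x, gmul (ginv x) x = gone
}.

Section Amalgam.
Variables (D : nzRingType) (n : nat).
Local Notation M := 'M[D]_n.

Definition hom_on (G : grp) (S : set M) (f : M -> G) : Prop :=
  forall x y, S x -> S y -> f (x *m y) = gmul (f x) (f y).

Definition mx_hom_on (S T : set M) (f : M -> M) : Prop :=
  (forall x, S x -> T (f x)) /\
  (forall x y, S x -> S y -> f (x *m y) = f x *m f y).

(* (P, iA, iB) is an amalgamated free product A *_C B, i.e. a pushout in the
   category of groups of the diagram A <-- C --> B (inclusions): the universal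
   property characterizing A *_C B up to unique isomorphism. *)
Definition is_amalgam (A C B P : set M) (iA iB : M -> M) : Prop :=
  [/\ mx_subgroup P, mx_hom_on A P iA, mx_hom_on B P iB,
      (forall c, C c -> iA c = iB c)
    & forall (G : grp) (fA fB : M -> G),
        hom_on A fA -> hom_on B fB -> (forall c, C c -> fA c = fB c) ->
        (exists F : M -> G, [/\ hom_on P F,
            forall a, A a -> F (iA a) = fA a
          & forall b, B b -> F (iB b) = fB b]) /\
        (forall F1 F2 : M -> G, hom_on P F1 -> hom_on P F2 ->
           (forall a, A a -> F1 (iA a) = F2 (iA a)) ->
           (forall b, B b -> F1 (iB b) = F2 (iB b)) ->
           forall x, P x -> F1 x = F2 x)].

End Amalgam.

Definition mxscale (K : fieldType) (D : falgType K) (n : nat) (t : K)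
  (m : 'M[D]_n) : 'M[D]_n := map_mx (fun x => t *: x) m.

Definition deform (K : fieldType) (D : falgType K) (n : nat) (delta : 'M[D]_n -> 'M[D]_n)
  (t : K) (h : 'M[D]_n) : 'M[D]_n := h + mxscale t (delta h).

(* Main.v *)
Require Import Defs.
From HB Require Import structures.
From mathcomp Require Import all_boot all_order all_algebra.
From mathcomp Require Import falgebra.
From mathcomp Require Import boolp classical_sets cardinality reals ring lra.
Import Order.TTheory GRing.Theory Num.Theory.
Import VectorInternalTheory.
Local Open Scope ring_scope.
Local Open Scope classical_set_scope.
Set Implicit Arguments. Unset Strict Implicit. Unset Printing Implicit Defensive.

Section AbsV.
Variables (R : realType) (K : fieldType) (v : K -> R).
Hypothesis hv : abs_value v.

Lemma av_ge0 x : 0 <= v x. Proof. by case: hv. Qed.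
Lemma av_eq0 x : v x = 0 <-> x = 0. Proof. by case: hv. Qed.
Lemma av0 : v 0 = 0. Proof. exact/av_eq0. Qed.
Lemma avM x y : v (x * y) = v x * v y. Proof. by case: hv. Qed.
Lemma avD x y : v (x + y) <= v x + v y. Proof. by case: hv. Qed.
Lemma av1 : v 1 = 1.
Proof.
have h1 : v 1 != 0 by apply/eqP => /av_eq0 /eqP; rewrite oner_eq0.
by apply: (mulfI h1); rewrite -avM !mulr1.
Qed.
Lemma avN x : v (- x) = v x.
Proof.
have hm : v (-1) = 1.
  have : v (-1) * v (-1) = 1 by rewrite -avM mulrNN mulr1 av1.
  move=> /eqP; rewrite -expr2 sqrf_eq1 => /orP[/eqP //|/eqP h].
  by have := av_ge0 (-1); rewrite h ler0N1.
by rewrite -mulN1r avM hm mul1r.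
Qed.
Lemma avB x y : v (x - y) = v (y - x).
Proof. by rewrite -avN opprB. Qed.

Lemma av_sum (I : Type) (r : seq I) (P : pred I) (F : I -> K) :
  v (\sum_(i <- r | P i) F i) <= \sum_(i <- r | P i) v (F i).
Proof.
elim/big_rec2: _ => [|i y1 y2 _ h]; first by rewrite av0.
by apply: le_trans (avD _ _) _; rewrite lerD2l.
Qed.

Definition nrm N (u : 'rV[K]_N) : R := \sum_j v (u 0 j).

Lemma nrm_ge0 N (u : 'rV[K]_N) : 0 <= nrm u.
Proof. by apply: sumr_ge0 => j _; apply: av_ge0. Qed.

Lemma nrm0 N : nrm (0 : 'rV[K]_N) = 0.
Proof. by rewrite /nrm big1 // => j _; rewrite mxE av0. Qed.

Lemma nrm_eq0 N (u : 'rV[K]_N) : nrm u = 0 -> u = 0.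
Proof.
move=> /eqP; rewrite psumr_eq0; last by move=> j _; apply: av_ge0.
move=> /allP h; apply/rowP => j; rewrite mxE.
by apply/av_eq0/eqP; apply: h; rewrite mem_index_enum.
Qed.

Lemma nrm_gt0 N (u : 'rV[K]_N) : u != 0 -> 0 < nrm u.
Proof.
move=> hu; rewrite lt_def nrm_ge0 andbT; apply/eqP => /nrm_eq0 h.
by rewrite h eqxx in hu.
Qed.

Lemma nrmD N (u w : 'rV[K]_N) : nrm (u + w) <= nrm u + nrm w.
Proof. by rewrite /nrm -big_split /=; apply: ler_sum => j _; rewrite mxE avD. Qed.

Lemma nrmZ N a (u : 'rV[K]_N) : nrm (a *: u) = v a * nrm u.
Proof. by rewrite /nrm mulr_sumr; apply: eq_bigr => j _; rewrite mxE avM. Qed.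

Lemma nrmN N (u : 'rV[K]_N) : nrm (- u) = nrm u.
Proof. by rewrite /nrm; apply: eq_bigr => j _; rewrite mxE avN. Qed.

Lemma nrmB N (u w : 'rV[K]_N) : nrm (u - w) = nrm (w - u).
Proof. by rewrite -nrmN opprB. Qed.

Lemma nrm_lbB N (u w : 'rV[K]_N) : nrm u - nrm w <= nrm (u - w).
Proof.
rewrite lerBlDr; apply: le_trans (nrmD _ _); by rewrite subrK.
Qed.

Definition mnrm M N (A : 'M[K]_(M, N)) : R := \sum_i \sum_j v (A i j).

Lemma mnrm_ge0 M N (A : 'M[K]_(M, N)) : 0 <= mnrm A.
Proof. by apply: sumr_ge0 => i _; apply: sumr_ge0 => j _; apply: av_ge0. Qed.

Lemma nrm_mul M N (u : 'rV[K]_M) (A : 'M[K]_(M, N)) :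
  nrm (u *m A) <= nrm u * mnrm A.
Proof.
rewrite /nrm.
apply: (@le_trans _ _ (\sum_j \sum_i v (u 0 i) * v (A i j))).
  apply: ler_sum => j _; rewrite mxE; apply: le_trans (av_sum _ _ _) _.
  by apply: ler_sum => i _; rewrite avM.
rewrite exchange_big /= mulr_suml; apply: ler_sum => i _.
rewrite -mulr_sumr; apply: ler_wpM2l; first exact: av_ge0.
rewrite /mnrm (bigD1 i) //= lerDl; apply: sumr_ge0 => k _.
by apply: sumr_ge0 => j _; apply: av_ge0.
Qed.

End AbsV.
Section Coord.
Variables (K : fieldType) (D : falgType K) (n : nat).
Local Notation V := 'cV[D]_n.
Local Notation N := (n * dim D)%N.

Definition rho (w : V) : 'rV[K]_N := mxvec (\matrix_(i, j) (v2r (w i 0)) 0 j).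
Definition rhoinv (u : 'rV[K]_N) : V := \col_i r2v (row i (vec_mx u)).

Lemma rhoK : cancel rho rhoinv.
Proof.
move=> w; apply/colP => i; rewrite /rhoinv /rho mxE mxvecK.
have -> : row i (\matrix_(i0, j) v2r (w i0 0) 0 j) = v2r (w i 0).
  by apply/rowP => j; rewrite !mxE.
by rewrite v2rK.
Qed.

Lemma rhoinvK : cancel rhoinv rho.
Proof.
move=> u; rewrite /rho /rhoinv.
have -> : \matrix_(i, j) v2r ((\col_i0 r2v (row i0 (vec_mx u))) i 0) 0 j = vec_mx u.
  by apply/matrixP => i j; rewrite !mxE r2vK !mxE.
by rewrite vec_mxK.
Qed.

Lemma rho_inj : injective rho. Proof. exact: can_inj rhoK. Qed.

Definition scalv (a : K) (w : V) : V := map_mx (fun x => a *: x) w.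

Lemma rhoD w w' : rho (w + w') = rho w + rho w'.
Proof.
rewrite /rho -linearD /=; congr mxvec; apply/matrixP => i j.
by rewrite !mxE linearD /= mxE.
Qed.

Lemma rhoZ a w : rho (scalv a w) = a *: rho w.
Proof.
rewrite /rho -linearZ /=; congr mxvec; apply/matrixP => i j.
by rewrite !mxE linearZ /= mxE.
Qed.

Lemma rho0 : rho 0 = 0.
Proof. by have := rhoD 0 0; rewrite addr0 => /eqP; rewrite -subr_eq subrr eq_sym => /eqP. Qed.

Lemma rhoN w : rho (- w) = - rho w.
Proof. by apply/eqP; rewrite -addr_eq0 -rhoD addNr rho0. Qed.

Lemma rhoB w w' : rho (w - w') = rho w - rho w'.
Proof. by rewrite rhoD rhoN. Qed.

Lemma rho_eq0 w : rho w = 0 -> w = 0.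
Proof. by move=> h; apply: rho_inj; rewrite h rho0. Qed.

Lemma mulmx_scalv (M : 'M[D]_n) a w : M *m scalv a w = scalv a (M *m w).
Proof.
apply/colP => i; rewrite !mxE scaler_sumr; apply: eq_bigr => k _.
by rewrite mxE scalerAr.
Qed.

Lemma mxscale_mul (M : 'M[D]_n) a w : mxscale a M *m w = scalv a (M *m w).
Proof.
apply/colP => i; rewrite !mxE scaler_sumr; apply: eq_bigr => k _.
by rewrite mxE scalerAl.
Qed.

Lemma rhoinvD u u' : rhoinv (u + u') = rhoinv u + rhoinv u'.
Proof. by apply: rho_inj; rewrite rhoD !rhoinvK. Qed.
Lemma rhoinvZ a u : rhoinv (a *: u) = scalv a (rhoinv u).
Proof. by apply: rho_inj; rewrite rhoZ !rhoinvK. Qed.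

Definition fM (M : 'M[D]_n) (u : 'rV[K]_N) : 'rV[K]_N := rho (M *m rhoinv u).

Lemma fM_lin M : linear (fM M).
Proof.
move=> a u u'; rewrite /fM rhoinvD rhoinvZ mulmxDr mulmx_scalv rhoD rhoZ //.
Qed.

HB.instance Definition _ M := GRing.isLinear.Build K _ _ _ (fM M) (fM_lin M).

Definition Mhat (M : 'M[D]_n) : 'M[K]_N := lin1_mx (fM M).

Lemma rho_mul M w : rho (M *m w) = rho w *m Mhat M.
Proof. by rewrite /Mhat mul_rV_lin1 /= /fM rhoK. Qed.

End Coord.

Lemma left_factor (K : fieldType) N (A B : 'M[K]_N) :
  (forall u : 'rV[K]_N, u *m A = 0 -> u *m B = 0) ->
  exists L : 'M[K]_N, B = A *m L.
Proof.
move=> hAB; set Q := cokermx A^T.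
have h1 : Q^T *m A = 0 by rewrite -[A]trmxK -trmx_mul mulmx_coker trmx0.
have h2 : Q^T *m B = 0.
  apply/row_matrixP => i; rewrite row_mul row0; apply: hAB.
  by rewrite -row_mul h1 row0.
have h3 : (B^T <= A^T)%MS.
  by rewrite submxE; apply/eqP; apply: trmx_inj; rewrite trmx_mul trmxK h2 trmx0.
exists (B^T *m pinvmx A^T)^T.
apply: trmx_inj; rewrite trmx_mul (trmxK (B^T *m pinvmx A^T)) mulmxKpV //.
Qed.

Section DNorm.
Variables (R : realType) (K : fieldType) (v : K -> R).
Hypothesis hv : abs_value v.
Variables (D : falgType K) (n : nat).
Local Notation V := 'cV[D]_n.

Definition dn (w : V) : R := nrm v (rho w).

Lemma dn_ge0 w : 0 <= dn w. Proof. exact: nrm_ge0. Qed.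
Lemma dn_eq0 w : dn w = 0 -> w = 0.
Proof. by move=> /(nrm_eq0 hv) /rho_eq0. Qed.
Lemma dn_gt0 w : w != 0 -> 0 < dn w.
Proof.
move=> hw; rewrite lt_def dn_ge0 andbT; apply/eqP => /dn_eq0 h.
by rewrite h eqxx in hw.
Qed.
Lemma dn0 : dn 0 = 0. Proof. by rewrite /dn rho0 nrm0 // ; apply: hv. Qed.
Lemma dnD w w' : dn (w + w') <= dn w + dn w'.
Proof. by rewrite /dn rhoD; apply: nrmD. Qed.
Lemma dnB w w' : dn (w - w') = dn (w' - w).
Proof. by rewrite /dn !rhoB; apply: nrmB. Qed.
Lemma dn_lbB w w' : dn w - dn w' <= dn (w - w').
Proof. by rewrite /dn rhoB; apply: nrm_lbB. Qed.
Lemma dnZ a w : dn (scalv a w) = v a * dn w.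
Proof. by rewrite /dn rhoZ nrmZ. Qed.

Lemma dn_mul (M : 'M[D]_n) w : dn (M *m w) <= dn w * mnrm v (Mhat M).
Proof. by rewrite /dn rho_mul; apply: nrm_mul. Qed.

Lemma dn_left (M1 M2 : 'M[D]_n) :
  (forall w : V, M1 *m w = 0 -> M2 *m w = 0) ->
  exists C : R, 0 <= C /\ forall w, dn (M2 *m w) <= dn (M1 *m w) * C.
Proof.
move=> h.
have [L hL] : exists L, Mhat M2 = Mhat M1 *m L.
  apply: left_factor => u hu.
  have e1 : rho (M1 *m rhoinv u) = 0 by rewrite rho_mul rhoinvK.
  have e2 := h _ (rho_eq0 e1).
  by rewrite -(rhoinvK u) -rho_mul e2 rho0.
exists (mnrm v L); split; first exact: mnrm_ge0.
by move=> w; rewrite /dn !rho_mul hL mulmxA; apply: nrm_mul.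
Qed.

End DNorm.
Lemma fin_bound (T : eqType) (R : realType) (S : set T) (P : T -> R -> Prop) :
  finite_set S -> (forall x, S x -> exists c, P x c) ->
  (forall x c c', P x c -> c <= c' -> P x c') ->
  exists c, forall x, S x -> P x c.
Proof.
move=> /finite_seqP [s ->] hex hmon.
suff [c hc] : exists c, forall x, x \in s -> P x c by exists c.
elim: s hex => [|a s IH] hex; first by exists 0.
have [c1 hc1] := IH (fun x (hx : x \in s) => hex x (@mem_behead _ (a :: s) x hx)).
have [c2 hc2] := hex a (mem_head a s : a \in a :: s).
exists (Num.max c1 c2) => x; rewrite in_cons => /orP[/eqP->|hx].
  by apply: hmon hc2 _; rewrite le_max lexx orbT.
by apply: hmon (hc1 x hx) _; rewrite le_max lexx.
Qed.

Section GrpLemmas.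
Variable G : grp.
Lemma gcancl (g x y : G) : gmul g x = gmul g y -> x = y.
Proof.
move=> h; rewrite -(gmul1 x) -(gmul1 y) -(gmulV g) -!gmulA h //.
Qed.
Lemma gidem (x : G) : gmul x x = x -> x = (gone G).
Proof.
move=> h; have := congr1 (gmul (ginv x)) h.
by rewrite gmulA gmulV gmul1.
Qed.
Lemma gmulVr (x : G) : gmul x (ginv x) = (gone G).
Proof.
apply: gidem; rewrite -gmulA (gmulA (ginv x)) gmulV gmul1 //.
Qed.
Lemma gmul1r (x : G) : gmul x (gone G) = x.
Proof. by rewrite -(gmulV x) gmulA gmulVr gmul1. Qed.
Lemma gcancr (g x y : G) : gmul x g = gmul y g -> x = y.
Proof.
move=> h; rewrite -(gmul1r x) -(gmul1r y) -(gmulVr g) !gmulA h //.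
Qed.
End GrpLemmas.

Section Words.
Variables (D : nzRingType) (n : nat).
Local Notation M := 'M[D]_n.
Variables (A B : set M).
Hypotheses (sA : mx_subgroup A) (sB : mx_subgroup B).

Definition letter := (bool * M)%type.
Definition valid (l : letter) : Prop := if l.1 then A l.2 else B l.2.
Fixpoint validw (w : seq letter) : Prop :=
  if w is l :: w' then valid l /\ validw w' else True.
Definition mval (w : seq letter) : M := foldr (fun l acc => l.2 *m acc) 1%:M w.

Definition W : set M := [set x | exists w, validw w /\ mval w = x].

Lemma validw_cat w w' : validw (w ++ w') <-> validw w /\ validw w'.
Proof. elim: w => [|l w IH] /=; [tauto| rewrite IH; tauto]. Qed.

Lemma mval_cat w w' : mval (w ++ w') = mval w *m mval w'.
Proof. by elim: w => [|l w IH] /=; rewrite ?mul1mx // IH mulmxA. Qed.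

Lemma grp_inv (S : set M) x : mx_subgroup S -> S x -> exists y, S y /\ mx_inverse x y.
Proof. by case=> _ _ h; apply: h. Qed.

Lemma valid_inv l : valid l -> exists y, valid (l.1, y) /\ mx_inverse l.2 y.
Proof. by rewrite /valid; case: l.1 => h; [apply: grp_inv sA h | apply: grp_inv sB h]. Qed.

Lemma word_inv w : validw w -> exists u, validw u /\ mx_inverse (mval w) (mval u).
Proof.
elim: w => [|l w IH] /=; first by move=> _; exists [::]; split => //; rewrite /mx_inverse mul1mx.
move=> [hl hw]; have [u [hu [i1 i2]]] := IH hw.
have [y [hy [j1 j2]]] := valid_inv hl.
exists (u ++ [:: (l.1, y)]); split; first by rewrite validw_cat /=.
rewrite mval_cat /= mulmx1; split.
  by rewrite mulmxA -(mulmxA l.2) i1 mulmx1 j1.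
by rewrite mulmxA -(mulmxA _ y) j2 mulmx1 i2.
Qed.

Lemma W_subgroup : mx_subgroup W.
Proof.
split; first by exists [::].
  move=> x y [w [hw <-]] [w' [hw' <-]]; exists (w ++ w').
  by rewrite validw_cat mval_cat.
move=> x [w [hw <-]]; have [u [hu hi]] := word_inv hw.
by exists (mval u); split => //; exists u.
Qed.

Lemma mx_gen_W : mx_gen (A `|` B) = W.
Proof.
apply/seteqP; split => x.
  move=> hx; apply: hx; first exact: W_subgroup.
  move=> y [hy|hy].
    by exists [:: (true, y)]; rewrite /= mulmx1.
  by exists [:: (false, y)]; rewrite /= mulmx1.
move=> [w [hw <-]] G [h1 hM _] hsub.
elim: w hw => [|l w IH] /= => [_|[hl hw]]; first exact: h1.
apply: hM (IH hw); apply: hsub.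
by move: hl; rewrite /valid; case: l.1 => h; [left|right].
Qed.

Fixpoint fullred (w : seq letter) : Prop :=
  if w is l :: w' then
    [/\ valid l, ~ (A l.2 /\ B l.2), fullred w' &
        (if w' is l' :: _ then l.1 <> l'.1 else True)]
  else True.

Definition nform (w : seq letter) : Prop :=
  (if w is [:: l] then valid l else fullred w).

Hypothesis key : forall w, fullred w -> w <> [::] -> mval w <> 1%:M.

Section Univ.
Variables (G : grp) (fA fB : M -> G).
Hypotheses (hA : hom_on A fA) (hB : hom_on B fB)
  (hC : forall c, A c -> B c -> fA c = fB c).

Definition fl (l : letter) : G := if l.1 then fA l.2 else fB l.2.
Definition fval (w : seq letter) : G := foldr (fun l acc => gmul (fl l) acc) (gone G) w.

Lemma fval_cat w w' : fval (w ++ w') = gmul (fval w) (fval w').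
Proof. by elim: w => [|l w IH] /=; rewrite ?gmul1 // IH gmulA. Qed.

Lemma f1 (S : set M) (f : M -> G) : mx_subgroup S -> hom_on S f -> f 1%:M = gone G.
Proof. by case=> h1 _ _ hf; apply: gidem; rewrite -hf // mulmx1. Qed.

Lemma inC_inv c : A c -> B c -> exists y, (A y /\ B y) /\ mx_inverse c y.
Proof.
move=> ha hb; have [y [hy [i1 i2]]] := grp_inv sA ha.
have [z [hz [k1 k2]]] := grp_inv sB hb.
have yz : y = z by rewrite -[y]mulmx1 -k1 mulmxA i2 mul1mx.
by exists y; split => //; split => //; rewrite yz.
Qed.

Lemma grp_mul (S : set M) x y : mx_subgroup S -> S x -> S y -> S (x *m y).
Proof. by case=> _ h _; apply: h. Qed.

Lemma notC_mull b c x : A c -> B c -> valid (b, x) -> ~ (A x /\ B x) -> ~ (A (c *m x) /\ B (c *m x)).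
Proof.
move=> ha hb hv hx [h1 h2]; apply: hx.
have [y [[ya yb] [i1 i2]]] := inC_inv ha hb.
have -> : x = y *m (c *m x) by rewrite mulmxA i2 mul1mx.
by split; [apply: grp_mul sA _ _ | apply: grp_mul sB _ _].
Qed.

Lemma fl_side b x : A x -> B x -> fl (b, x) = fA x.
Proof. by rewrite /fl; case: b => //= ha hb; rewrite hC. Qed.

Lemma valid_side b x : A x -> B x -> valid (b, x).
Proof. by rewrite /valid; case: b. Qed.

Lemma valid_mul b x y : valid (b, x) -> valid (b, y) -> valid (b, x *m y).
Proof. by rewrite /valid; case: b => /= hx hy; [apply: grp_mul sA _ _|apply: grp_mul sB _ _]. Qed.

Lemma fl_mul b x y : valid (b, x) -> valid (b, y) -> fl (b, x *m y) = gmul (fl (b, x)) (fl (b, y)).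
Proof. by rewrite /valid /fl; case: b => /= hx hy; [apply: hA|apply: hB]. Qed.

Lemma normal_form w : validw w ->
  exists r, [/\ nform r, mval r = mval w & fval r = fval w].
Proof.
elim: w => [|l w IH] /=; first by move=> _; exists [::].
case: l => b x [hl hw]; have [r [hr er fr]] := IH hw.
rewrite -er -fr {IH er fr hw w}.
case: r hr => [|[b1 x1] r] hr.
  by exists [:: (b, x)].
case: r hr => [|[b2 x2] r] hr.
  rewrite /nform /= in hr.
  have [[ha1 hb1]|hC1] := pselect (A x1 /\ B x1).
    exists [:: (b, x *m x1)]; split; rewrite /nform /= ?mulmx1 ?gmul1r //.
      by apply: valid_mul => //; apply: valid_side.
    rewrite (fl_mul hl (valid_side b ha1 hb1)).
    by rewrite (fl_side b ha1 hb1) (fl_side b1 ha1 hb1).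
  have [eb|neb] := pselect (b = b1).
    subst b1; exists [:: (b, x *m x1)]; split; rewrite /nform /= ?mulmx1 ?gmul1r //.
      exact: valid_mul.
    by rewrite fl_mul.
  have [[ha hb]|hC0] := pselect (A x /\ B x).
    exists [:: (b1, x *m x1)]; split; rewrite /nform /= ?mulmx1 ?gmul1r //.
      by apply: valid_mul => //; apply: valid_side.
    rewrite (fl_mul (valid_side b1 ha hb) hr).
    by rewrite (fl_side b1 ha hb) (fl_side b ha hb).
  exists [:: (b, x); (b1, x1)]; split => //=.
rewrite /nform in hr; case: hr => /= hv1 hC1 hr' hb12.
have [eb|neb] := pselect (b = b1).
  subst b1.
  have hm : valid (b, x *m x1) by apply: valid_mul.
  have [[ham hbm]|hCm] := pselect (A (x *m x1) /\ B (x *m x1)).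
    case: hr' => hv2 hC2 hr'' hb2r.
    exists ((b2, x *m x1 *m x2) :: r); split.
    - rewrite /nform; case: r hr'' hb2r => [|l3 r] hr'' hb2r //=.
        by apply: valid_mul => //; apply: valid_side.
      split => //.
        by apply: valid_mul => //; apply: valid_side.
      exact: (@notC_mull b2).
    - by rewrite /= !mulmxA.
    - by rewrite /= (fl_mul (valid_side b2 ham hbm) hv2) (fl_side b2 ham hbm) -(fl_side b ham hbm) (fl_mul hl hv1) !gmulA.
  exists ((b, x *m x1) :: (b2, x2) :: r); split.
  - by rewrite /nform /=.
  - by rewrite /= !mulmxA.
  - by rewrite /fval /= (fl_mul hl hv1) -gmulA.
have [[ha hb]|hC0] := pselect (A x /\ B x).
  exists ((b1, x *m x1) :: (b2, x2) :: r); split.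
  - rewrite /nform /=; split => //; first exact: (valid_mul (valid_side b1 ha hb) hv1).
    exact: (@notC_mull b1).
  - by rewrite /= !mulmxA.
  - by rewrite /fval /= (fl_mul (valid_side b1 ha hb) hv1) (fl_side b1 ha hb) -(fl_side b ha hb) !gmulA.
exists ((b, x) :: (b1, x1) :: (b2, x2) :: r); split => //.
Qed.

Lemma nform_one r : nform r -> mval r = 1%:M -> fval r = gone G.
Proof.
case: r => [|l [|l2 r]] //= hr.
  rewrite mulmx1 => e; rewrite gmul1r /fl; move: hr; rewrite /valid e.
  by case: l.1 => h; [apply: f1 hA | apply: f1 hB].
by move=> e; case: (@key [:: l, l2 & r] hr _ e).
Qed.

Lemma word1 w : validw w -> mval w = 1%:M -> fval w = gone G.
Proof.
move=> hw e; have [r [hr er fr]] := normal_form hw.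
by rewrite -fr; apply: nform_one; rewrite // er.
Qed.

Lemma well_def w w' : validw w -> validw w' -> mval w = mval w' -> fval w = fval w'.
Proof.
move=> hw hw' e; have [u [hu [i1 i2]]] := word_inv hw'.
apply: (@gcancr _ (fval u)); rewrite -!fval_cat !word1 //.
- by rewrite validw_cat.
- by rewrite mval_cat.
- by rewrite validw_cat.
- by rewrite mval_cat e.
Qed.

Lemma amalgam_exist : exists F : M -> G,
  [/\ hom_on W F, forall a, A a -> F a = fA a & forall b, B b -> F b = fB b].
Proof.
have hc : forall x, exists w, W x -> validw w /\ mval w = x.
  move=> x; have [[w hw]|nw] := pselect (W x); first by exists w.
  by exists [::].
have [g hg] := choice hc.
exists (fun x => fval (g x)); split.
- move=> x y hx hy; rewrite -fval_cat.
  have hxy : W (x *m y) by apply: (grp_mul W_subgroup).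
  have [h1 e1] := hg _ hx; have [h2 e2] := hg _ hy; have [h3 e3] := hg _ hxy.
  apply: well_def => //; first by rewrite validw_cat.
  by rewrite mval_cat e1 e2.
- move=> a ha; have hw : W a by exists [:: (true, a)]; rewrite /= mulmx1.
  have [h1 e1] := hg _ hw.
  rewrite (@well_def _ [:: (true, a)]) //=; first by rewrite /fl /= gmul1r.
  by rewrite e1 mulmx1.
- move=> b hb; have hw : W b by exists [:: (false, b)]; rewrite /= mulmx1.
  have [h1 e1] := hg _ hw.
  rewrite (@well_def _ [:: (false, b)]) //=; first by rewrite /fl /= gmul1r.
  by rewrite e1 mulmx1.
Qed.

End Univ.

Lemma amalgam_uniq (G : grp) (F1 F2 : M -> G) : hom_on W F1 -> hom_on W F2 ->
  (forall a, A a -> F1 a = F2 a) -> (forall b, B b -> F1 b = F2 b) ->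
  forall x, W x -> F1 x = F2 x.
Proof.
move=> h1 h2 ea eb x [w [hw <-]]; elim: w hw => [|l w IH] /=.
  by move=> _; rewrite (f1 W_subgroup h1) (f1 W_subgroup h2).
move=> [hl hw].
have hwl : W l.2 by exists [:: l]; rewrite /= mulmx1.
have hww : W (mval w) by exists w.
rewrite h1 // h2 // IH //; congr gmul.
by move: hl; rewrite /valid; case: l.1; [apply: ea | apply: eb].
Qed.

Lemma amalgam_full (C : set M) : (forall x, C x <-> A x /\ B x) ->
  is_amalgam A C B (mx_gen (A `|` B)) id id.
Proof.
move=> hCe; rewrite mx_gen_W; split => //.
- exact: W_subgroup.
- split => // x hx; by exists [:: (true, x)]; rewrite /= mulmx1.
- split => // x hx; by exists [:: (false, x)]; rewrite /= mulmx1.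
move=> G fA fB hA hB hC; split.
  apply: amalgam_exist => // c ha hb; apply: hC; exact/hCe.
by move=> F1 F2 h1 h2; apply: amalgam_uniq.
Qed.

End Words.

Section Main.
Variables (R : realType) (K : fieldType) (v : K -> R) (D : falgType K) (n : nat)
  (A H : set 'M[D]_n) (delta : 'M[D]_n -> 'M[D]_n).
Hypotheses (hv : abs_value v) (fA : finite_mx_subgroup A) (fH : finite_mx_subgroup H).
Local Notation C := (A `&` H).
Hypothesis hi : forall g, H g -> (delta g = 0 <-> C g).
Hypothesis hii : forall a h h', (A `\` C) a -> (H `\` C) h -> (H `\` C) h' ->
     mx_lmul_set a (mx_im (delta h)) `&` mx_ker (delta h') = [set 0].
Local Notation dn := (dn v).

Lemma mnrm_bound (S : set 'M[D]_n) (f : 'M[D]_n -> 'M[D]_n) : finite_set S ->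
  exists c : R, forall M, S M -> mnrm v (Mhat (f M)) <= c.
Proof.
move=> fS; apply: (fin_bound (P := fun M c => mnrm v (Mhat (f M)) <= c)) => //.
  by move=> M _; exists (mnrm v (Mhat (f M))).
by move=> M c c' h1 h2; apply: le_trans h1 h2.
Qed.

Lemma const_c : exists c : R, 1 <= c /\
  forall M, (A M \/ H M \/ exists h, H h /\ M = delta h) -> forall w, dn (M *m w) <= dn w * c.
Proof.
have [c1 h1] := mnrm_bound id (proj2 fA).
have [c2 h2] := mnrm_bound id (proj2 fH).
have [c3 h3] := mnrm_bound delta (proj2 fH).
exists (Num.max 1 (Num.max c1 (Num.max c2 c3))); split; first by rewrite le_max lexx.
move=> M hM w; apply: le_trans (dn_mul _ _ _) _; first exact: hv.
apply: ler_wpM2l; first exact: dn_ge0.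
case: hM => [hM|[hM|[h [hh ->]]]].
- by apply: le_trans (h1 _ hM) _; rewrite !le_max lexx !orbT.
- by apply: le_trans (h2 _ hM) _; rewrite !le_max lexx !orbT.
- by apply: le_trans (h3 _ hh) _; rewrite !le_max lexx !orbT.
Qed.

Lemma delta_nz h : (H `\` C) h -> exists y : 'cV[D]_n, delta h *m y != 0.
Proof.
move=> [hh hC].
have hd : delta h != 0 by apply/eqP => /(hi hh).
apply/not_existsP => hall; move/eqP: hd; apply; apply/matrixP => i j.
have := hall (delta_mx j 0); move/negP/negPn/eqP/colP/(_ i).
by rewrite !mxE (bigD1 j) //= big1 ?mxE ?eqxx ?mulr1 ?addr0 // => k /negPf hk; rewrite mxE hk mulr0.
Qed.

Lemma const_k : exists k : R, 1 <= k /\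
  (forall a h h' y, (A `\` C) a -> (H `\` C) h -> (H `\` C) h' ->
     dn (a *m (delta h *m y)) <= k * dn (delta h' *m (a *m (delta h *m y)))) /\
  (forall h, (H `\` C) h -> exists y, y != 0 /\ dn y <= k * dn (delta h *m y)).
Proof.
have mon1 : forall (P : 'M[D]_n -> R -> Prop), (forall x c c', P x c -> c <= c' -> P x c') -> True by [].
have fAC : finite_set (A `\` C) by apply: (sub_finite_set _ (proj2 fA)) => x [].
have fHC : finite_set (H `\` C) by apply: (sub_finite_set _ (proj2 fH)) => x [].
pose P1 a k := forall h h' y, (H `\` C) h -> (H `\` C) h' ->
     dn (a *m (delta h *m y)) <= k * dn (delta h' *m (a *m (delta h *m y))).
have mP : forall a k k', P1 a k -> k <= k' -> P1 a k'.
  move=> a k k' hk hkk h h' y h1 h2; apply: le_trans (hk h h' y h1 h2) _.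
  by apply: ler_wpM2r => //; apply: dn_ge0.
have [k1 hk1] : exists k, forall a, (A `\` C) a -> P1 a k.
  apply: (fin_bound fAC _ mP) => a ha.
  pose P2 h k := forall h' y, (H `\` C) h' ->
     dn (a *m (delta h *m y)) <= k * dn (delta h' *m (a *m (delta h *m y))).
  have [k hk] : exists k, forall h, (H `\` C) h -> P2 h k.
    apply: (fin_bound fHC); last first.
      move=> h k k' hk hkk h' y h2; apply: le_trans (hk h' y h2) _.
      by apply: ler_wpM2r => //; apply: dn_ge0.
    move=> h hh.
    have [k hk] : exists k, forall h', (H `\` C) h' -> forall y,
       dn (a *m (delta h *m y)) <= k * dn (delta h' *m (a *m (delta h *m y))).
      apply: (fin_bound fHC); last first.
        move=> h' k k' hk hkk y; apply: le_trans (hk y) _.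
        by apply: ler_wpM2r => //; apply: dn_ge0.
      move=> h' hh'.
      have hker : forall w : 'cV[D]_n, (delta h' *m a *m delta h) *m w = 0 -> (a *m delta h) *m w = 0.
        move=> w hw.
        have : (mx_lmul_set a (mx_im (delta h)) `&` mx_ker (delta h')) (a *m delta h *m w).
          split; first by exists (delta h *m w) => //; [exists w|rewrite mulmxA].
          by rewrite /mx_ker /= !mulmxA.
        by rewrite hii // => ->.
      have [k [k0 hk]] := dn_left hv hker.
      exists k => y; rewrite mulrC; have := hk y; by rewrite !mulmxA.
    by exists k => h' y h2; apply: hk.
  by exists k => h h' y h1 h2; apply: hk.
have [k2 hk2] : exists k, forall h, (H `\` C) h -> exists y, y != 0 /\ dn y <= k * dn (delta h *m y).
  apply: (fin_bound fHC); last first.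
    move=> h k k' [y [y0 hy]] hkk; exists y; split => //; apply: le_trans hy _.
    by apply: ler_wpM2r => //; apply: dn_ge0.
  move=> h hh; have [y hy] := delta_nz hh.
  exists (dn y / dn (delta h *m y)), y; split.
    by apply: contraNneq hy => ->; rewrite mulmx0.
  by rewrite divfK // gt_eqF // dn_gt0.
exists (Num.max 1 (Num.max k1 k2)); split; first by rewrite le_max lexx.
split.
  move=> a h h' y ha hh hh'; apply: mP (hk1 a ha) _ h h' y hh hh'.
  by rewrite !le_max lexx !orbT.
move=> h hh; have [y [y0 hy]] := hk2 h hh; exists y; split => //.
apply: le_trans hy _; apply: ler_wpM2r; first exact: dn_ge0.
by rewrite !le_max lexx !orbT.
Qed.


Section PingPong.
Variables (c k : R) (t : K).
Hypotheses (c1 : 1 <= c) (k1 : 1 <= k).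
Hypothesis hc : forall M, (A M \/ H M \/ exists h, H h /\ M = delta h) ->
  forall w, dn (M *m w) <= dn w * c.
Hypothesis hk : forall a h h' y, (A `\` C) a -> (H `\` C) h -> (H `\` C) h' ->
     dn (a *m (delta h *m y)) <= k * dn (delta h' *m (a *m (delta h *m y))).
Hypothesis hk2 : forall h, (H `\` C) h -> exists y, y != 0 /\ dn y <= k * dn (delta h *m y).

Definition eta : R := (2 * (c * c) * (1 + k * c))^-1.
Definition lam : R := v t / (2 * k) - c.
Hypothesis ht : 2 * k * (c + c / eta + c * c + 1) <= v t.

Lemma c0 : 0 < c. Proof. by apply: lt_le_trans c1; rewrite ltr01. Qed.
Lemma k0 : 0 < k. Proof. by apply: lt_le_trans k1; rewrite ltr01. Qed.
Lemma eta_pos : 0 < eta.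
Proof.
have := c0; have := k0; move=> hk0 hc0.
rewrite /eta invr_gt0; apply: mulr_gt0; first by apply: mulr_gt0 => //; apply: mulr_gt0.
by apply: ltr_wpDr; [apply: mulr_ge0; apply: ltW|rewrite ltr01].
Qed.
Lemma eta_eq : eta * (c * c) * (1 + k * c) = 2^-1.
Proof.
have hc0 := c0; have hk0 := k0.
have h1 : 1 + k * c != 0 by rewrite gt_eqF // ltr_wpDr ?ltr01 // mulr_ge0 // ltW.
have h2 : c != 0 by rewrite gt_eqF.
by rewrite /eta; field; rewrite h1 h2.
Qed.

Lemma lam_ge : c / eta + c * c + 1 <= lam.
Proof.
have hk0 := k0.
rewrite /lam lerBrDl ler_pdivlMr; last by rewrite mulr_gt0.
have -> : (c + (c / eta + c * c + 1)) * (2 * k) = 2 * k * (c + c / eta + c * c + 1) by ring.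
exact: ht.
Qed.

Lemma lam_gt0 : 0 < lam.
Proof.
apply: lt_le_trans lam_ge; apply: ltr_wpDl; last by rewrite ltr01.
apply: addr_ge0; last by apply: mulr_ge0; apply: ltW; apply: c0.
by apply: divr_ge0; apply: ltW; [apply: c0 | apply: eta_pos].
Qed.

Definition X2 (x : 'cV[D]_n) := x != 0 /\
  exists h y, (H `\` C) h /\ dn (x - delta h *m y) <= eta * dn x.
Definition good h (x : 'cV[D]_n) := x != 0 /\ dn x <= 2 * k * dn (delta h *m x).
Definition X1 (x : 'cV[D]_n) := x != 0 /\
  forall h, (H `\` C) h -> dn x <= 2 * k * dn (delta h *m x).

Lemma cA a w : A a -> dn (a *m w) <= dn w * c.
Proof. by move=> ha; apply: hc; left. Qed.
Lemma cH h w : H h -> dn (h *m w) <= dn w * c.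
Proof. by move=> ha; apply: hc; right; left. Qed.
Lemma cD h w : H h -> dn (delta h *m w) <= dn w * c.
Proof. by move=> ha; apply: hc; right; right; exists h. Qed.

Lemma stepA a x : (A `\` C) a -> X2 x -> X1 (a *m x) /\ dn x <= c * dn (a *m x).
Proof.
move=> [ha haC] [x0 [h [y [hh hE]]]].
have [a' [ha' [i1 i2]]] := grp_inv (proj1 fA) ha.
have ex : x = a' *m (a *m x) by rewrite mulmxA i2 mul1mx.
have hX : dn x <= c * dn (a *m x) by rewrite {1}ex mulrC; apply: cA.
split => //; split.
  by apply: contraNneq x0 => e; rewrite ex e mulmx0.
move=> h' hh'.
set Y := dn (a *m x); set Xd := dn x; set E := dn (x - delta h *m y).
set d0 := dn (delta h' *m (a *m (delta h *m y))); set d1 := dn (delta h' *m (a *m x)).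
set d2 := dn (a *m (delta h *m y)).
have F1 : d0 - d1 <= E * c * c.
  apply: le_trans (dn_lbB hv _ _) _.
  rewrite -mulmxBr -mulmxBr.
  apply: le_trans (cD _ hh'.1) _; rewrite ler_pM2r ?c0 //.
  by apply: le_trans (cA _ ha) _; rewrite ler_pM2r ?c0 // dnB.
have F2 : d2 <= k * d0 by apply: hk.
have F3 : Y - d2 <= E * c.
  apply: le_trans (dn_lbB hv _ _) _; rewrite -mulmxBr.
  exact: cA.
have hE0 : 0 <= E by apply: dn_ge0.
have hc0 := c0; have hk0 := k0; have he0 := eta_pos.
have pos1 : 0 <= 1 + k * c by rewrite addr_ge0 // mulr_ge0 // ltW.
have F1k : k * d0 - k * d1 <= k * (E * c * c).
  by rewrite -mulrBr; exact: (ler_wpM2l (ltW hk0) F1).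
have F4 : E * c * (1 + k * c) <= eta * Xd * c * (1 + k * c).
  exact: (ler_wpM2r pos1 (ler_wpM2r (ltW hc0) hE)).
have F5 : eta * Xd * c * (1 + k * c) <= eta * (c * Y) * c * (1 + k * c).
  exact: (ler_wpM2r pos1 (ler_wpM2r (ltW hc0) (ler_wpM2l (ltW he0) hX))).
have F6 : eta * (c * Y) * c * (1 + k * c) = Y / 2.
  by rewrite -eta_eq; ring.
have e1 : k * (E * c * c) = E * c * (k * c) by ring.
have e2 : E * c * (1 + k * c) = E * c + E * c * (k * c) by ring.
lra.
Qed.

Lemma deform_mul h x : deform delta t h *m x = h *m x + scalv t (delta h *m x).
Proof. by rewrite /deform mulmxDl mxscale_mul. Qed.

Lemma stepH h x : (H `\` C) h -> good h x ->
  X2 (deform delta t h *m x) /\ lam * dn x <= dn (deform delta t h *m x).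
Proof.
move=> hh [x0 hg].
set y := deform delta t h *m x.
have hS : dn (scalv t (delta h *m x)) = v t * dn (delta h *m x) by apply: dnZ.
have hvt : 0 <= v t by apply: av_ge0.
have hc0 := c0; have hk0 := k0; have he0 := eta_pos.
have G1 : dn (scalv t (delta h *m x)) - dn y <= dn x * c.
  apply: le_trans (dn_lbB hv _ _) _; rewrite (dnB hv) /y deform_mul addrK.
  exact: cH hh.1.
have G2 : v t * dn x <= 2 * k * (v t * dn (delta h *m x)).
  by rewrite mulrCA; exact: (ler_wpM2l hvt hg).
have G3 : v t / (2 * k) * dn x <= v t * dn (delta h *m x).
  rewrite mulrAC ler_pdivrMr; first by rewrite [X in _ <= X]mulrC; exact: G2.
  by apply: mulr_gt0.
have Hl : lam * dn x <= dn y by rewrite /lam mulrBl; lra.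
split => //; split.
  apply/eqP => y0; have := lt_le_trans (mulr_gt0 lam_gt0 (dn_gt0 hv x0)) Hl.
  by rewrite y0 dn0 // ltxx.
exists h, (scalv t x); split => //.
rewrite mulmx_scalv /y deform_mul addrK.
apply: le_trans (cH _ hh.1) _.
have L1 : c <= eta * lam.
  rewrite mulrC -ler_pdivrMr //; apply: le_trans lam_ge.
  rewrite -addrA lerDl addr_ge0 // mulr_ge0 // ltW //.
have dx0 : 0 <= dn x by apply: dn_ge0.
have L2 : dn x * c <= eta * (lam * dn x) by rewrite mulrA [dn x * c]mulrC; exact: (ler_wpM2r dx0 L1).
by apply: le_trans L2 _; rewrite -deform_mul; exact: (ler_wpM2l (ltW he0) Hl).
Qed.

Definition ppv (l : bool * 'M[D]_n) : Prop :=
  if l.1 then (A `\` C) l.2 else exists h, (H `\` C) h /\ l.2 = deform delta t h.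
Fixpoint ppw (w : seq (bool * 'M[D]_n)) : Prop :=
  if w is l :: w' then
    [/\ ppv l, ppw w' & (if w' is l' :: _ then l.1 <> l'.1 else True)]
  else True.
Fixpoint pre (w : seq (bool * 'M[D]_n)) (x : 'cV[D]_n) : Prop :=
  match w with
  | [::] => False
  | [:: l] => if l.1 then X2 x else
              exists h, [/\ (H `\` C) h, l.2 = deform delta t h & good h x]
  | l :: w' => pre w' x
  end.
Definition mu : R := lam / c.
Definition hasH (w : seq (bool * 'M[D]_n)) := has (fun l : bool * 'M[D]_n => ~~ l.1) w.
Definition post (w : seq (bool * 'M[D]_n)) (x y : 'cV[D]_n) : Prop :=
  match w with
  | [::] => True
  | l :: _ => if l.1 then [/\ X1 y, dn x <= c * dn y & (hasH w -> mu * dn x <= c * dn y)]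
              else X2 y /\ mu * dn x <= dn y
  end.

Lemma mu_gt_c : c < mu.
Proof.
have hc0 := c0; have he0 := eta_pos.
rewrite /mu ltr_pdivlMr //; apply: lt_le_trans lam_ge.
have : 0 <= c / eta by rewrite divr_ge0 // ltW.
lra.
Qed.

Lemma mu_ge1 : 1 <= mu.
Proof. by apply: le_trans (ltW mu_gt_c). Qed.

Lemma pp_main w : ppw w -> w <> [::] -> forall x, pre w x -> post w x (mval w *m x).
Proof.
elim: w => [|l w IH] //= [hl hw hal] _ x.
have hc0 := c0; have hmu1 := mu_ge1; have hlam := lam_gt0.
have dx0 : 0 <= dn x by apply: dn_ge0.
case: w IH hw hal => [|l' w] IH hw hal.
  rewrite mulmx1; move: hl; case: l => [[|] a] /= hl hpre.
    by have [h1 h2] := stepA hl hpre; split.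
  case: hpre => [h [hh e hg]]; rewrite e.
  have [h1 h2] := stepH hh hg; split => //; apply: le_trans h2.
  rewrite /mu ler_wpM2r // ler_pdivrMr // ler_peMr // ltW //.
move=> hpre.
have ne : l' :: w <> [::] by []. have hp := IH hw ne x hpre.
rewrite -mulmxA.
set y' := mval (l' :: w) *m x in hp *.
have dy0 : 0 <= dn y' by apply: dn_ge0.
clear IH hw ne hpre; move: hl hal hp => /=; case: l => b a /=; case: (l'.1); case: b => /= hl hal; try by case: hal.
  move=> [hX1 hxy _].
  case: hl => [h [hh e]]; rewrite /= in e; rewrite e.
  have [h1 h2] := stepH hh (conj hX1.1 (hX1.2 h hh)); split => //.
  apply: le_trans h2.
  have H1 := ler_wpM2l (ltW hlam) hxy; rewrite /mu mulrAC ler_pdivrMr //.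
  by have -> : lam * dn y' * c = lam * (c * dn y') by ring.
move=> [hX2 hmu].
have [h1 h2] := stepA hl hX2; split => //.
- have h3 : dn x <= mu * dn x by nra.
  by apply: le_trans h2; apply: le_trans h3 hmu.
- by move=> _; apply: le_trans h2.
Qed.

Lemma ppw_mem w l : ppw w -> l \in w -> ppv l.
Proof.
elim: w => [|l1 w IH] //= [h1 hw _]; rewrite in_cons => /orP[/eqP ->//|hl].
exact: IH.
Qed.

Lemma pre_ex w : (exists h0, (H `\` C) h0) -> ppw w -> w <> [::] -> exists x, pre w x.
Proof.
move=> [h0 hh0]; elim: w => [|l w IH] //= [hl hw hal] _.
case: w IH hw hal => [|l' w] IH hw hal; last first.
  by have ne : l' :: w <> [::] by []; have := IH hw ne.
move: hl; case: l => [[|] a] /= hl.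
  have [y hy] := delta_nz hh0.
  exists (delta h0 *m y); split => //; exists h0, y; split => //.
  rewrite subrr dn0 //; apply: mulr_ge0; [exact: ltW eta_pos | exact: dn_ge0].
case: hl => [h [hh e]]; have [y [y0 hy]] := hk2 hh.
exists y, h; split => //; split => //; apply: le_trans hy _.
apply: ler_wpM2r; first exact: dn_ge0.
have := k0; lra.
Qed.

Lemma pp_ne1 w : ppw w -> w <> [::] -> mval w <> 1%:M.
Proof.
move=> hw hne e.
have hc0 := c0.
have [hH|nH] := boolP (hasH w); last first.
  case: w hw hne e nH => [|l [|l' w]] //=.
    move=> [hl _ _] _; rewrite mulmx1 orbF negbK => e hl1.
    move: hl; rewrite /ppv hl1 e => -[_ hC1]; apply: hC1.
    by split; [case: (proj1 fA) | case: (proj1 fH)].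
  move=> [_ _ hal] _ _ /norP [/negPn h1 /norP [/negPn h2 _]].
  by apply: hal; rewrite h1 h2.
have [h0 hh0] : exists h0, (H `\` C) h0.
  move: hH; rewrite /hasH => /hasP [l hl hl1].
  move: (ppw_mem hw hl); rewrite /ppv (negbTE hl1) => -[h [hh _]].
  by exists h.
have [x hx] := pre_ex (ex_intro _ h0 hh0) hw hne.
have := pp_main hw hne hx; rewrite e mul1mx.
case: w hw hne hH {e hx} => [|l w] //= _ _ hH.
case: l.1 hH => hH.
  move=> [[x0 _] _ /(_ hH) hm].
  have := dn_gt0 hv x0; have := mu_gt_c; nra.
move=> [[x0 _] hm].
have hd := dn_gt0 hv x0; have hm1 : 1 < mu := le_lt_trans c1 mu_gt_c; nra.
Qed.

Hypothesis hder : first_order_deformation H (fun h => mxscale t (delta h)).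

Local Notation phi := (deform delta t).

Lemma mxscale0 : mxscale t (0 : 'M[D]_n) = 0.
Proof. by apply/matrixP => i j; rewrite !mxE scaler0. Qed.

Lemma phiC x : C x -> phi x = x.
Proof.
move=> hx; rewrite /deform.
have -> : delta x = 0 by apply/(hi hx.2).
by rewrite mxscale0 addr0.
Qed.

Lemma phiM h h' : H h -> H h' -> phi (h *m h') = phi h *m phi h'.
Proof.
move=> hh hh'; rewrite /deform (proj1 hder h h' hh hh') mulmxDl !mulmxDr.
by rewrite (proj2 hder h h' hh hh') addr0 addrA addrAC.
Qed.

Lemma oneC : C 1%:M.
Proof. by split; [case: (proj1 fA) | case: (proj1 fH)]. Qed.

Lemma phi1 : phi 1%:M = 1%:M.
Proof. exact: phiC oneC. Qed.

Local Notation Ht := (phi @` H).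

Lemma Ht_sub : mx_subgroup Ht.
Proof.
split; first by exists 1%:M; [case: (proj1 fH)| exact: phi1].
  move=> x y [h hh <-] [h' hh' <-]; exists (h *m h'); last exact: phiM.
  exact: (grp_mul (proj1 fH)).
move=> x [h hh <-]; have [h' [hh' [i1 i2]]] := grp_inv (proj1 fH) hh.
exists (phi h'); split; first by exists h'.
by split; rewrite -phiM // ?i1 ?i2 phi1.
Qed.

Lemma C_mul x y : C x -> C y -> C (x *m y).
Proof.
by move=> [xa xh] [ya yh]; split; [apply: (grp_mul (proj1 fA)) | apply: (grp_mul (proj1 fH))].
Qed.

Lemma phi_ker g0 : H g0 -> phi g0 = 1%:M -> C g0.
Proof.
move=> hg0 e; apply: contrapT => nk.
have hw : ppw [:: (false, phi g0)] by split => //; exists g0.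
by apply: (pp_ne1 hw) => //=; rewrite mulmx1.
Qed.

Lemma phi_notC h : H h -> ~ C h -> ~ C (phi h).
Proof.
move=> hh hC hpC.
have [x' [[xa xh] [j1 j2]]] := inC_inv (proj1 fA) (proj1 fH) hpC.1 hpC.2.
have hx'C : C x' by [].
have hkk : H (h *m x') by apply: (grp_mul (proj1 fH)).
have : C (h *m x').
  by apply: phi_ker => //; rewrite phiM // (phiC hx'C) j1.
move=> hkC; apply: hC.
have -> : h = h *m x' *m phi h by rewrite -mulmxA j2 mulmx1.
exact: C_mul.
Qed.

Lemma phi_inj h h' : H h -> H h' -> phi h = phi h' -> h = h'.
Proof.
move=> hh hh' e.
have [z [hz [i1 i2]]] := grp_inv (proj1 fH) hh'.
have hkk : H (h *m z) by apply: (grp_mul (proj1 fH)).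
have hkC : C (h *m z) by apply: phi_ker => //; rewrite phiM // e -phiM // i1 phi1.
have e1 : h *m z = 1%:M by rewrite -(phiC hkC) phiM // e -phiM // i1 phi1.
by rewrite -[h]mulmx1 -i2 mulmxA e1 mul1mx.
Qed.

Lemma AHt_C x : C x <-> A x /\ Ht x.
Proof.
split.
  by move=> hx; split; [exact: hx.1 | exists x; [exact: hx.2 | exact: phiC]].
move=> [ha [h hh e]]; apply: contrapT => nx.
have nh : ~ C h by move=> hC; apply: nx; rewrite -e phiC.
have [a' [ha' [i1 i2]]] := grp_inv (proj1 fA) ha.
have na' : ~ C a'.
  move=> [a'a a'h].
  have [y [[ya yh] [l1 l2]]] := inC_inv (proj1 fA) (proj1 fH) a'a a'h.
  have exy : x = y by rewrite -[x]mulmx1 -l1 mulmxA i1 mul1mx.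
  by apply: nx; rewrite exy.
have hw : ppw [:: (true, a'); (false, x)].
  split => //=; split => //; exists h; split => //.
by apply: (pp_ne1 hw) => //=; rewrite mulmx1 i2.
Qed.

Lemma fullred_ppw w : fullred A Ht w -> ppw w.
Proof.
elim: w => [|l w IH] //= [hl hnC hw hal]; split => //; last exact: IH.
move: hl hnC; rewrite /valid /ppv; case: l.1.
  by move=> ha hnC; split => // hC; apply: hnC; apply/AHt_C.
move=> [h hh e] hnC; exists h; split => //; split => // hC.
by apply: hnC; apply/AHt_C; rewrite -e phiC.
Qed.

Lemma amalg1 : is_amalgam A C Ht (mx_gen (A `|` Ht)) id id.
Proof.
apply: (amalgam_full (proj1 fA) Ht_sub) => [w hw hne|x]; last exact: AHt_C.
exact: (pp_ne1 (fullred_ppw hw) hne).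
Qed.

Lemma amalg2 : is_amalgam A C H (mx_gen (A `|` Ht)) id phi.
Proof.
have [hP [hA1 hA2] [hH1 hH2] _ hU] := amalg1.
split => //.
- split; first by move=> x hx; apply: hH1; exists x.
  by move=> x y hx hy; rewrite phiM.
- by move=> x hx; rewrite phiC.
move=> G fA' fB hA hB hC0.
have hch : forall x, exists h, Ht x -> H h /\ phi h = x.
  move=> x; have [[h hh e]|nx] := pselect (Ht x); first by exists h.
  by exists 1%:M.
have [g hg] := choice hch.
have gphi : forall h, H h -> g (phi h) = h.
  move=> h hh; have [h1 h2] := hg (phi h) (ex_intro2 _ _ h hh erefl).
  by apply: phi_inj.
pose fB' x := fB (g x).
have hB' : hom_on Ht fB'.
  move=> x y [h hh <-] [h' hh' <-]; rewrite /fB' -phiM // !gphi //.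
    exact: hB.
  exact: (grp_mul (proj1 fH)).
have hC' : forall c0, C c0 -> fA' c0 = fB' c0.
  move=> c0 hc0; rewrite /fB' -{2}(phiC hc0) gphi; [exact: hC0 | exact: hc0.2].
have [[F [F1 F2 F3]] _] := hU G fA' fB' hA hB' hC'.
split.
  exists F; split => // b hb; rewrite F3; last by exists b.
  by rewrite /fB' gphi.
move=> F1' F2' h1 h2 ea eb.
have hA' : hom_on A F1' by move=> x y hx hy; apply: h1; apply: hA1.
have hB'' : hom_on Ht F1' by move=> x y hx hy; apply: h1; apply: hH1.
have [_ hu] := hU G F1' F1' hA' hB'' (fun _ _ => erefl).
apply: hu => // b [h hh <-]; exact: eb.
Qed.

End PingPong.

End Main.

Theorem theorem4p8 (R : realType) (K : fieldType) (v : K -> R)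
  (D : falgType K) (n : nat) (A H : set 'M[D]_n) (delta : 'M[D]_n -> 'M[D]_n) :
  local_field v ->
  [pchar K] =i pred0 ->
  (forall x : D, x != 0 -> x \is a GRing.unit) ->
  finite_mx_subgroup A -> finite_mx_subgroup H ->
  let C := A `&` H in
  (index_gt2 A C \/ index_gt2 H C) ->
  (forall t : K, t != 0 ->
     first_order_deformation H (fun h => mxscale t (delta h))) ->
  (forall g, H g -> (delta g = 0 <-> C g)) ->
  (forall a h h', (A `\` C) a -> (H `\` C) h -> (H `\` C) h' ->
     mx_lmul_set a (mx_im (delta h)) `&` mx_ker (delta h') = [set 0]) ->
  exists N : R, forall t : K, t != 0 -> N <= v t ->
    let Ht := deform delta t @` H in
    let P := mx_gen (A `|` Ht) in
    is_amalgam A C Ht P id id /\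
    is_amalgam A C H P id (deform delta t).
Proof.
move=> hloc _ _ fA fH C _ hdef hi hii.
have hv : abs_value v by case: hloc.
have [c [c1 hc]] := const_c delta hv fA fH.
have [k [k1 [hk hk2]]] := const_k hv fA fH hi hii.
exists (2 * k * (c + c / eta c k + c * c + 1)) => t t0 ht Ht P.
split.
  exact: (amalg1 hv fA fH hi c1 k1 hc hk hk2 ht (hdef t t0)).
exact: (amalg2 hv fA fH hi c1 k1 hc hk hk2 ht (hdef t t0)).
Qed.
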